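(* Let $U\subset\mathbb{R}^{n+1}$ be a bounded open convex domain with $C^3$ boundary of positive normal curvatures, $o\in U$ the origin, $\omega$ the radial function of $\partial U$, $c=\max_{u\in\mathbb{S}^n}\frac{\omega(u)}{\omega(-u)}$, and let $\Phi:\mathbb{S}^n\times\mathbb{R}_{\ge0}\to U$, $\Phi(u,s)=\tanh(s)\,\omega(u)\,u$. Put $d_1=-\frac12\ln\big[\frac12(1+\frac1c)\big]$ and $d_2=-\frac12\ln\big[\frac12(1+c)\big]$. Then for every $d\ge d_1$ there is $\rho_0$ such that $B_\rho^{n+1}\subseteq\Phi(\mathbb{S}^n\times[0,\rho+d])$ for all $\rho\ge\rho_0$, and for every $d\le d_2$ there is $\rho_0$ such that $\Phi(\mathbb{S}^n\times[0,\rho+d])\subseteq B_\rho^{n+1}$ for all $\rho\ge\rho_0$. In particular, for $\rho$ large, $\mathbf{Vol}(\Phi(\mathbb{S}^n\times[0,\rho+d_2]))\le\mathbf{Vol}(B_\rho^{n+1})\le\mathbf{Vol}(\Phi(\mathbb{S}^n\times[0,\rho+d_1]))$; if $U$ is centrally symmetric about $o$ then $d_1=d_2=0$.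
   Context: $B_\rho^{n+1}$ is the closed metric ball of radius $\rho$ centered at $o$ for the Hilbert distance $d_U(p,q)=\frac12\ln\big(\frac{\|q-q_1\|}{\|q-p_1\|}\cdot\frac{\|p-p_1\|}{\|p-q_1\|}\big)$, where $p_1,q_1$ are the intersection points with $\partial U$ of the half-lines $p+\mathbb{R}_{-}(q-p)$, $p+\mathbb{R}_{+}(q-p)$. The radial function $\omega:\mathbb{S}^n\to\mathbb{R}_+$ is such that $u\mapsto\omega(u)u$ parametrizes $\partial U$. $\mathbf{Vol}$ is the Busemann–Hausdorff volume of $(U,F_U)$, i.e. $\int\sigma(p)\,dp$ with $\sigma(p)=\mathbf{Vol}_E(\mathbb{B}^{n+1})/\mathbf{Vol}_E(\{v:F_U(p,v)<1\})$, $F_U(p,v)=\frac12\|v\|\big(\frac1{\|p-p_-\|}+\frac1{\|p-p_+\|}\big)$, $p_\mp$ the intersection points of $p+\mathbb{R}_\mp v$ with $\partial U$. *)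

(* Defs.v *)
From Stdlib Require Import Reals.
From mathcomp Require Import ssreflect ssrfun ssrbool eqtype ssrnat seq fintype bigop.

Set Implicit Arguments.
Unset Strict Implicit.
Unset Printing Implicit Defensive.

Local Open Scope R_scope.

Definition Vec (N : nat) := 'I_N -> R.

Section Vectors.
Variable N : nat.

Definition vzero : Vec N := fun _ => 0.
Definition vadd (x y : Vec N) : Vec N := fun i => x i + y i.
Definition vsub (x y : Vec N) : Vec N := fun i => x i - y i.
Definition vscal (a : R) (x : Vec N) : Vec N := fun i => a * x i.
Definition vopp (x : Vec N) : Vec N := fun i => - x i.
Definition basis (j : 'I_N) : Vec N := fun i => if i == j then 1 else 0.
Definition dot (x y : Vec N) : R := \big[Rplus/0]_(i < N) (x i * y i).
Definition norm (x : Vec N) : R := sqrt (dot x x).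
Definition quad (H : 'I_N -> 'I_N -> R) (v : Vec N) : R :=
  \big[Rplus/0]_(i < N) \big[Rplus/0]_(j < N) (H i j * v i * v j).

Definition is_open (V : Vec N -> Prop) : Prop :=
  forall x, V x -> exists r, 0 < r /\ forall y, norm (vsub y x) < r -> V y.
Definition is_bounded (V : Vec N -> Prop) : Prop :=
  exists M, forall x, V x -> norm x <= M.
Definition is_convex (V : Vec N -> Prop) : Prop :=
  forall x y t, V x -> V y -> 0 <= t <= 1 ->
    V (vadd (vscal (1 - t) x) (vscal t y)).
Definition boundary (V : Vec N -> Prop) (x : Vec N) : Prop :=
  (forall e, 0 < e -> exists y, V y /\ norm (vsub y x) < e) /\
  (forall e, 0 < e -> exists y, ~ V y /\ norm (vsub y x) < e).

Definition continuous_on (V : Vec N -> Prop) (g : Vec N -> R) : Prop :=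
  forall x, V x -> forall e, 0 < e -> exists d, 0 < d /\
    forall y, V y -> norm (vsub y x) < d -> Rabs (g y - g x) < e.

Definition partial_at (g : Vec N -> R) (i : 'I_N) (x : Vec N) (l : R) : Prop :=
  derivable_pt_lim (fun t => g (vadd x (vscal t (basis i)))) 0 l.

Definition partial2_at (g : Vec N -> R) (i j : 'I_N) (x : Vec N) (l : R) : Prop :=
  exists r h, 0 < r /\
    (forall y, norm (vsub y x) < r -> partial_at g i y (h y)) /\
    partial_at h j x l.

Fixpoint Ck (k : nat) (g : Vec N -> R) (V : Vec N -> Prop) : Prop :=
  continuous_on V g /\
  match k with
  | O => True
  | S k' => exists Dg : 'I_N -> Vec N -> R,
      (forall i x, V x -> partial_at g i x (Dg i x)) /\
      (forall i, Ck k' (Dg i) V)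
  end.

(** U is a bounded open convex domain with C^3 boundary of positive normal
    curvatures: near the boundary, U is the sublevel set {g < 0} of a C^3
    function g with non-vanishing gradient, whose Hessian is positive definite
    on the tangent hyperplane (= positivity of the second fundamental form). *)
Definition C3_pos_curv_boundary (U : Vec N -> Prop) : Prop :=
  exists (V : Vec N -> Prop) (g : Vec N -> R),
    is_open V /\ (forall x, boundary U x -> V x) /\ Ck 3 g V /\
    (forall x, V x -> (U x <-> g x < 0)) /\
    forall x, boundary U x ->
      exists (G : Vec N) (H : 'I_N -> 'I_N -> R),
        (forall i, partial_at g i x (G i)) /\
        (forall i j, partial2_at g i j x (H i j)) /\
        G <> vzero /\
        forall v, v <> vzero -> dot G v = 0 -> 0 < quad H v.

(** For p <> q, p1 = p + a (q - p)
    (a <= 0) and q1 = p + b (q - p) (b >= 0) are the boundary points on the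
    line through p and q, p1 on the side of p and q1 on the side of q. *)
Definition hilbert_dist (U : Vec N -> Prop) (p q : Vec N) (d : R) : Prop :=
  (p = q /\ d = 0) \/
  (p <> q /\ exists a b : R,
     a <= 0 /\ 0 <= b /\
     let p1 := vadd p (vscal a (vsub q p)) in
     let q1 := vadd p (vscal b (vsub q p)) in
     boundary U p1 /\ boundary U q1 /\
     d = / 2 * ln ((norm (vsub q p1) / norm (vsub q q1)) *
                   (norm (vsub p q1) / norm (vsub p p1)))).

Definition hilbert_ball (U : Vec N -> Prop) (rho : R) (p : Vec N) : Prop :=
  U p /\ exists d, hilbert_dist U vzero p d /\ d <= rho.

Definition unit_sphere (u : Vec N) : Prop := norm u = 1.

Definition radial_function (U : Vec N -> Prop) (omega : Vec N -> R) : Prop :=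
  forall u, unit_sphere u -> 0 < omega u /\ boundary U (vscal (omega u) u).

Definition is_max_ratio (omega : Vec N -> R) (c : R) : Prop :=
  (exists u, unit_sphere u /\ c = omega u / omega (vopp u)) /\
  (forall u, unit_sphere u -> omega u / omega (vopp u) <= c).

Definition Phi (omega : Vec N -> R) (u : Vec N) (s : R) : Vec N :=
  vscal (tanh s * omega u) u.
Definition Phi_image (omega : Vec N -> R) (Rmax : R) (x : Vec N) : Prop :=
  exists u s, unit_sphere u /\ 0 <= s <= Rmax /\ x = Phi omega u s.

Definition centrally_symmetric (U : Vec N -> Prop) : Prop :=
  forall x, U x -> U (vopp x).

End Vectors.

Definition subset_of {T : Type} (A B : T -> Prop) : Prop := forall x, A x -> B x.

(* Main.v *)
Require Import Defs.
From HB Require Import structures.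
From Stdlib Require Import Reals Lra Psatz FunctionalExtensionality.
From mathcomp Require Import ssreflect ssrfun ssrbool eqtype ssrnat seq fintype bigop.
Local Open Scope R_scope.

HB.instance Definition _ := Monoid.isComLaw.Build R 0 Rplus (fun a b c => esym (Rplus_assoc a b c)) Rplus_comm Rplus_0_l.

Lemma div_ge0 a b : 0 <= a -> 0 < b -> 0 <= a / b.
Proof. move=> ha hb. apply: Rmult_le_pos => //. apply/Rlt_le/Rinv_0_lt_compat; lra. Qed.

Section H.
Variable N : nat.
Implicit Types x y u : Vec N.

Ltac vext := apply: functional_extensionality => i; rewrite /vscal /vadd /vsub /vopp /vzero.

Lemma dot_scal k x : dot (vscal k x) (vscal k x) = (k*k) * dot x x.
Proof. rewrite /dot /vscal. elim/big_rec2: _ => [|i y1 y2 _ ->]; ring. Qed.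

Lemma norm_scal k x : norm (vscal k x) = Rabs k * norm x.
Proof.
rewrite /norm dot_scal sqrt_mult_alt; last nra.
by rewrite -sqrt_Rsqr_abs.
Qed.

Lemma dot_ge0 x : 0 <= dot x x.
Proof. rewrite /dot. apply: (big_ind (fun v => 0 <= v)).
- lra. - move=> a b; lra. - move=> i _; nra. Qed.

Lemma norm_pos x : x <> (@vzero N) -> 0 < norm x.
Proof.
move=> Hx. rewrite /norm. apply: sqrt_lt_R0.
case: (Rle_lt_or_eq_dec _ _ (dot_ge0 x)) => // H0. exfalso; apply: Hx.
vext. have: x i * x i <= dot x x.
  rewrite /dot (bigD1 i) //=.
  rewrite -{1}(Rplus_0_r (x i * x i)); apply: Rplus_le_compat_l.
  apply: (big_ind (fun v => 0 <= v)).
  - lra. - move=> a b; lra. - move=> j _; nra.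
rewrite -H0; nra.
Qed.

Lemma norm_sym x y : norm (vsub y x) = norm (vsub x y).
Proof.
have -> : vsub y x = vscal (-1) (vsub x y) by vext; ring.
rewrite norm_scal Rabs_Ropp Rabs_R1; ring.
Qed.

Lemma unit_opp u : unit_sphere u -> unit_sphere (vopp u).
Proof.
rewrite /unit_sphere => H. have -> : vopp u = vscal (-1) u by vext; ring.
rewrite norm_scal Rabs_Ropp Rabs_R1 H; ring.
Qed.

Lemma vopp_opp u : vopp (vopp u) = u.
Proof. vext; ring. Qed.

Variable U : Vec N -> Prop.
Hypothesis Ho : is_open U.
Hypothesis Hc : is_convex U.
Hypothesis H0 : U (@vzero N).

Lemma bnd_notin x : boundary U x -> ~ U x.
Proof.
move=> [_ H2] Ux. case: (Ho x Ux) => r [r0 Hr]. case: (H2 r r0) => y [nU ny].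
exact: nU (Hr y ny).
Qed.

Lemma seg b t : boundary U b -> 0 <= t < 1 -> U (vscal t b).
Proof.
move=> Hb Ht. case: (Req_dec t 0) => [->|tn0].
  have -> : vscal 0 b = (@vzero N) by vext; ring. exact H0.
case: (Ho _ H0) => r [r0 Hr]. case: Hb => [H1 _].
have e0 : 0 < r * (1 - t) / t.
  apply: Rdiv_lt_0_compat; [nra|lra].
case: (H1 _ e0) => y [Uy ny].
set z := vscal (t / (1 - t)) (vsub b y).
have Uz : U z.
  apply: Hr. have -> : vsub z (@vzero N) = z by vext; ring.
  rewrite /z norm_scal norm_sym Rabs_right; last first.
    apply: Rle_ge; apply: div_ge0; lra.
  have -> : r = t / (1 - t) * (r * (1 - t) / t) by field; lra.
  apply: Rmult_lt_compat_l => //. apply: Rdiv_lt_0_compat; lra.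
have -> : vscal t b = vadd (vscal (1 - t) z) (vscal t y).
  vext. rewrite /z /vscal /vsub. field. lra.
apply: Hc => //; lra.
Qed.

Lemma uniq_ray u l m : 0 < l -> 0 < m -> boundary U (vscal l u) -> boundary U (vscal m u) -> l = m.
Proof.
move=> l0 m0 Bl Bm.
have key : forall l m, 0 < l -> 0 < m -> boundary U (vscal l u) -> boundary U (vscal m u) -> ~ l < m.
  move=> l' m' l0' m0' Bl' Bm' lt. apply: (bnd_notin _ Bl').
  have -> : vscal l' u = vscal (l' / m') (vscal m' u) by vext; field; lra.
  apply: seg => //. split. apply: div_ge0; lra.
  apply (Rmult_lt_reg_r m') => //. field_simplify; lra.
case: (Rtotal_order l m) => [h|[h|h]] //.
  by case: (key l m).
by case: (key m l).
Qed.

End H.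

Lemma expN s : exp (- s) = / exp s.
Proof.
have h : exp (- s) * exp s = 1 by rewrite -exp_plus; replace (-s + s) with 0 by ring; exact exp_0.
have := exp_pos s. move=> hp. apply (Rmult_eq_reg_r (exp s)); [|lra].
rewrite h Rinv_l //; lra.
Qed.

Lemma tanh_exp s : tanh s = (exp s * exp s - 1) / (exp s * exp s + 1).
Proof.
rewrite /tanh /sinh /cosh expN. have := exp_pos s => hp. field. split; nra.
Qed.

Lemma tanh_ln s : ln ((1 + tanh s) / (1 - tanh s)) = 2 * s.
Proof.
rewrite tanh_exp. have := exp_pos s => hp.
have -> : (1 + (exp s * exp s - 1) / (exp s * exp s + 1)) /
   (1 - (exp s * exp s - 1) / (exp s * exp s + 1)) = exp s * exp s.
  field; split; nra.
rewrite ln_mult // ln_exp; ring.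
Qed.

Lemma tanh_bnd s : 0 <= s -> 0 <= tanh s < 1.
Proof.
move=> s0. rewrite tanh_exp. have := exp_ineq1_le s => h1.
have hp : 0 < exp s * exp s + 1 by nra.
split.
- apply: div_ge0 => //; nra.
- apply (Rmult_lt_reg_r (exp s * exp s + 1)) => //. field_simplify; lra.
Qed.

Lemma tanh_pos s : 0 < s -> 0 < tanh s.
Proof.
move=> s0. rewrite tanh_exp. have := exp_ineq1 s => h1.
have hp : 0 < exp s * exp s + 1 by nra.
apply: Rdiv_lt_0_compat => //. have : 1 + s < exp s by apply: h1; lra. nra.
Qed.

Lemma tanh0 : tanh 0 = 0.
Proof. rewrite /tanh /sinh /cosh Ropp_0 exp_0. field. Qed.

Lemma ln_le' x y : 0 < x -> x <= y -> ln x <= ln y.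
Proof.
move=> x0 xy. case: (Rle_lt_or_eq_dec _ _ xy) => [h|->]; last lra.
apply: Rlt_le; exact: ln_increasing.
Qed.

Lemma bnd_opp N (U : Vec N -> Prop) x :
  (forall y, U y -> U (vopp y)) -> boundary U x -> boundary U (vopp x).
Proof.
move=> Hs [H1 H2]. split=> e e0.
- case: (H1 e e0) => y [Uy ny]. exists (vopp y); split; first exact: Hs.
  have -> : vsub (vopp y) (vopp x) = vscal (-1) (vsub y x).
    apply: functional_extensionality => i; rewrite /vscal /vsub /vopp; ring.
  by rewrite norm_scal Rabs_Ropp Rabs_R1 Rmult_1_l.
- case: (H2 e e0) => y [Uy ny]. exists (vopp y); split.
    move=> h; apply: Uy. rewrite -(vopp_opp _ y). exact: Hs.
  have -> : vsub (vopp y) (vopp x) = vscal (-1) (vsub y x).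
    apply: functional_extensionality => i; rewrite /vscal /vsub /vopp; ring.
  by rewrite norm_scal Rabs_Ropp Rabs_R1 Rmult_1_l.
Qed.

Lemma norm0 N : norm (@vzero N) = 0.
Proof.
have -> : @vzero N = vscal 0 (@vzero N).
  apply: functional_extensionality => i; rewrite /vscal /vzero; ring.
rewrite norm_scal Rabs_R0; ring.
Qed.

Theorem mainTheorem5 (n : nat) (U : Vec n.+1 -> Prop)
  (omega : Vec n.+1 -> R) (c : R) :
  is_open U -> is_bounded U -> is_convex U -> U (@vzero n.+1) ->
  C3_pos_curv_boundary U ->
  radial_function U omega ->
  is_max_ratio omega c ->
  let d1 := - (/ 2) * ln (/ 2 * (1 + / c)) in
  let d2 := - (/ 2) * ln (/ 2 * (1 + c)) in
  (forall d, d1 <= d -> exists rho0 : R, forall rho, rho0 <= rho ->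
      subset_of (hilbert_ball U rho) (Phi_image omega (rho + d))) /\
  (forall d, d <= d2 -> exists rho0 : R, forall rho, rho0 <= rho ->
      subset_of (Phi_image omega (rho + d)) (hilbert_ball U rho)) /\
  (centrally_symmetric U -> d1 = 0 /\ d2 = 0).
Proof.
move=> Ho _ Hc HU0 _ Hrad [[u0 [u0s Hc0]] Hmax] d1 d2.
have BN := bnd_notin _ _ Ho. 
have SEG := seg _ _ Ho Hc HU0.
have UR := uniq_ray _ _ Ho Hc HU0.
have wpos : forall u, unit_sphere u -> 0 < omega u by move=> u /Hrad [].
have w0 := wpos _ u0s. have w0' := wpos _ (unit_opp _ _ u0s).
have hm0 := Hmax _ (unit_opp _ _ u0s). rewrite vopp_opp in hm0.
have cpos : 0 < c by rewrite Hc0; apply: Rdiv_lt_0_compat.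
have c1 : 1 <= c.
  have e : omega (vopp u0) / omega u0 = / c by rewrite Hc0; field; lra.
  rewrite e in hm0.
  have : 1 <= c * c.
    have := Rmult_le_compat_l c _ _ (Rlt_le _ _ cpos) hm0. rewrite Rinv_r; lra.
  nra.
have hk : c * / c = 1 by apply: Rinv_r; lra.
have kpos : 0 < / c by apply: Rinv_0_lt_compat.
split; [|split].
-
  move=> d Hd. exists (- d) => rho Hrho x [Ux [del [Hdist Hdel]]].
  case: Hdist => [[Hx _] | [Hx [a [b [Ha [Hbb Hrest]]]]]].
    exists u0, 0. split; first done. split; first lra.
    rewrite /Phi tanh0 -Hx. apply: functional_extensionality => i.
    rewrite /vscal /vzero; ring.
  cbv zeta in Hrest.
  have Ep1 : vadd (@vzero n.+1) (vscal a (vsub x (@vzero n.+1))) = vscal a x.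
    apply: functional_extensionality => i; rewrite /vscal /vadd /vsub /vzero; ring.
  have Eq1 : vadd (@vzero n.+1) (vscal b (vsub x (@vzero n.+1))) = vscal b x.
    apply: functional_extensionality => i; rewrite /vscal /vadd /vsub /vzero; ring.
  rewrite Ep1 Eq1 in Hrest. case: Hrest => [Bp [Bq Hdeq]].
  have Np : 0 < norm x by apply: norm_pos => e; apply: Hx; rewrite e.
  set u := vscal (/ norm x) x.
  have us : unit_sphere u.
    rewrite /unit_sphere /u norm_scal Rabs_right; last first.
      apply: Rle_ge; apply/Rlt_le/Rinv_0_lt_compat; lra.
    field; lra.
  have bn0 : b <> 0.
    move=> b0; apply: (BN _ Bq). have -> : vscal b x = @vzero n.+1.
      apply: functional_extensionality => i; rewrite /vscal /vzero b0; ring.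
    exact HU0.
  have an0 : a <> 0.
    move=> a0; apply: (BN _ Bp). have -> : vscal a x = @vzero n.+1.
      apply: functional_extensionality => i; rewrite /vscal /vzero a0; ring.
    exact HU0.
  have b1 : 1 < b.
    case: (Rlt_le_dec 1 b) => // hb. exfalso. apply: (BN _ Bq).
    have -> : vscal b x = vadd (vscal (1 - b) (@vzero n.+1)) (vscal b x).
      apply: functional_extensionality => i; rewrite /vscal /vadd /vzero; ring.
    apply: Hc => //; lra.
  have Bq' : boundary U (vscal (b * norm x) u).
    have <- : vscal b x = vscal (b * norm x) u => //.
    apply: functional_extensionality => i; rewrite /u /vscal; field; lra.
  have Bp' : boundary U (vscal (- a * norm x) (vopp u)).
    have <- : vscal a x = vscal (- a * norm x) (vopp u) => //.
    apply: functional_extensionality => i; rewrite /u /vscal /vopp; field; lra.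
  have Hw : omega u = b * norm x.
    apply: UR; [exact: wpos | nra | exact: (Hrad _ us).2 | exact Bq'].
  have Hw' : omega (vopp u) = - a * norm x.
    apply: UR; [exact: (wpos _ (unit_opp _ _ us)) | nra | exact: (Hrad _ (unit_opp _ _ us)).2 | exact Bp'].
  have E1 : vsub x (vscal a x) = vscal (1 - a) x.
    apply: functional_extensionality => i; rewrite /vscal /vsub; ring.
  have E2 : vsub x (vscal b x) = vscal (1 - b) x.
    apply: functional_extensionality => i; rewrite /vscal /vsub; ring.
  have E3 : vsub (@vzero n.+1) (vscal b x) = vscal (- b) x.
    apply: functional_extensionality => i; rewrite /vscal /vsub /vzero; ring.
  have E4 : vsub (@vzero n.+1) (vscal a x) = vscal (- a) x.
    apply: functional_extensionality => i; rewrite /vscal /vsub /vzero; ring.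
  rewrite E1 E2 E3 E4 !norm_scal in Hdeq.
  have r1 : Rabs (1 - a) = 1 - a by apply: Rabs_right; lra.
  have r2 : Rabs (1 - b) = b - 1 by rewrite Rabs_left; lra.
  have r3 : Rabs (- b) = b by rewrite Rabs_Ropp; apply: Rabs_right; lra.
  have r4 : Rabs (- a) = - a by apply: Rabs_right; lra.
  rewrite r1 r2 r3 r4 in Hdeq.
  have Q : del = / 2 * ln ((1 - a) * b / ((b - 1) * (- a))).
    rewrite Hdeq; congr (/ 2 * ln _). field; lra.
  have bp : 0 < (b + 1) / (b - 1) by apply: Rdiv_lt_0_compat; lra.
  exists u, (/ 2 * ln ((b + 1) / (b - 1))). split; first done. split; [split|].
  + have : ln 1 <= ln ((b + 1) / (b - 1)).
      apply: ln_le'; first lra.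
      apply (Rmult_le_reg_r (b - 1)); first lra. field_simplify; lra.
    rewrite ln_1; lra.
  + have hr := Hmax _ (unit_opp _ _ us). rewrite vopp_opp Hw Hw' in hr.
    set A := - a in hr Q. have A0 : 0 < A by rewrite /A; lra.
    have hAb : A <= c * b.
      have : A / b = A * norm x / (b * norm x) by field; lra.
      move=> e. rewrite -e in hr.
      have := Rmult_le_compat_r b _ _ (Rlt_le _ _ (Rlt_trans _ _ _ Rlt_0_1 b1)) hr.
      have -> : A / b * b = A by field; lra. lra.
    have hAk : A * / c <= b by nra.
    have kle1 : / c <= 1.
      have := Rinv_le_contravar _ _ Rlt_0_1 c1. by rewrite Rinv_1.
    have hh : 0 <= A * ((b - 1) * (1 - / c)).
      apply: Rmult_le_pos; first lra. apply: Rmult_le_pos; lra.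
    have num : (b + 1) * (1 + / c) * A <= 2 * (1 + A) * b by nra.
    have key : ln ((b + 1) / (b - 1)) + ln (/ 2 * (1 + / c)) <= ln ((1 - a) * b / ((b - 1) * A)).
      rewrite -ln_mult //; last by apply: Rmult_lt_0_compat; lra.
      apply: ln_le'. apply: Rmult_lt_0_compat => //; lra.
      have -> : (b + 1) / (b - 1) * (/ 2 * (1 + / c)) = ((b + 1) * (1 + / c) * A) * / (2 * (b - 1) * A) by field; lra.
      have -> : (1 - a) * b / ((b - 1) * A) = (2 * (1 + A) * b) * / (2 * (b - 1) * A) by rewrite /A; field; lra.
      apply: Rmult_le_compat_r => //. apply/Rlt_le/Rinv_0_lt_compat. nra.
    rewrite /d1 in Hd. lra.
  + rewrite /Phi Hw tanh_exp.
    have -> : exp (/ 2 * ln ((b + 1) / (b - 1))) * exp (/ 2 * ln ((b + 1) / (b - 1))) = (b + 1) / (b - 1).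
      rewrite -exp_plus. have -> : / 2 * ln ((b + 1) / (b - 1)) + / 2 * ln ((b + 1) / (b - 1)) = ln ((b + 1) / (b - 1)) by field.
      by rewrite exp_ln.
    apply: functional_extensionality => i. rewrite /u /vscal. field. lra.
-
  move=> d Hd. exists 0 => rho Hrho x [u [s [us [[s0 sle] ->]]]].
  have [t0 t1] := tanh_bnd _ s0.
  have wp := wpos _ us. have wp' := wpos _ (unit_opp _ _ us).
  have hr := Hmax _ us.
  have wle : omega u <= c * omega (vopp u).
    have := Rmult_le_compat_r (omega (vopp u)) _ _ (Rlt_le _ _ wp') hr.
    have -> : omega u / omega (vopp u) * omega (vopp u) = omega u by field; lra. lra.
  rewrite /Phi.
  set t := tanh s in t0 t1 *. set w := omega u in wp hr wle *. set w' := omega (vopp u) in wp' hr wle *.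
  have Ux : U (vscal (t * w) u).
    have -> : vscal (t * w) u = vscal t (vscal w u).
      apply: functional_extensionality => i; rewrite /vscal; ring.
    apply: SEG => //. exact: (Hrad _ us).2.
  split; first done.
  case: (Req_dec s 0) => [s00|sn0].
    exists 0; split; last lra. left; split => //.
    rewrite /t s00 tanh0. apply: functional_extensionality => i; rewrite /vscal /vzero; ring.
  have tp : 0 < t by apply: tanh_pos; lra.
  exists (/ 2 * ln ((t * w + w') / (w - t * w) * (w / w'))). split.
  + right. split.
      move=> e. have := norm0 n.+1. rewrite e norm_scal us Rabs_right; first nra.
      apply: Rle_ge; nra.
    exists (- w' / (t * w)), (/ t). split.
      have : 0 <= w' / (t * w) by apply: div_ge0; nra.
      have -> : - w' / (t * w) = - (w' / (t * w)) by field; nra. lra.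
    split; first by apply/Rlt_le/Rinv_0_lt_compat.
    cbv zeta.
    have E1 : vadd (@vzero n.+1) (vscal (- w' / (t * w)) (vsub (vscal (t * w) u) (@vzero n.+1))) = vscal w' (vopp u).
      apply: functional_extensionality => i; rewrite /vscal /vadd /vsub /vzero /vopp; field; lra.
    have E2 : vadd (@vzero n.+1) (vscal (/ t) (vsub (vscal (t * w) u) (@vzero n.+1))) = vscal w u.
      apply: functional_extensionality => i; rewrite /vscal /vadd /vsub /vzero; field; lra.
    rewrite E1 E2. split; first exact: (Hrad _ (unit_opp _ _ us)).2.
    split; first exact: (Hrad _ us).2.
    have F1 : vsub (vscal (t * w) u) (vscal w' (vopp u)) = vscal (t * w + w') u.
      apply: functional_extensionality => i; rewrite /vscal /vsub /vopp; ring.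
    have F2 : vsub (vscal (t * w) u) (vscal w u) = vscal (t * w - w) u.
      apply: functional_extensionality => i; rewrite /vscal /vsub; ring.
    have F3 : vsub (@vzero n.+1) (vscal w u) = vscal (- w) u.
      apply: functional_extensionality => i; rewrite /vscal /vsub /vzero; ring.
    have F4 : vsub (@vzero n.+1) (vscal w' (vopp u)) = vscal w' u.
      apply: functional_extensionality => i; rewrite /vscal /vsub /vzero /vopp; ring.
    rewrite F1 F2 F3 F4 !norm_scal us.
    have r1 : Rabs (t * w + w') = t * w + w' by apply: Rabs_right; nra.
    have r2 : Rabs (t * w - w) = w - t * w by rewrite Rabs_left; nra.
    have r3 : Rabs (- w) = w by rewrite Rabs_Ropp; apply: Rabs_right; lra.
    have r4 : Rabs w' = w' by apply: Rabs_right; lra.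
    rewrite r1 r2 r3 r4 !Rmult_1_r. done.
  + have hs := tanh_ln s. rewrite -/t in hs.
    have key : ln ((t * w + w') / (w - t * w) * (w / w')) <= ln ((1 + t) / (1 - t)) + ln (/ 2 * (1 + c)).
      rewrite -ln_mult; last (apply: Rmult_lt_0_compat; lra); last (apply: Rdiv_lt_0_compat; lra).
      apply: ln_le'.
        apply: Rmult_lt_0_compat; apply: Rdiv_lt_0_compat; nra.
      have -> : (t * w + w') / (w - t * w) * (w / w') = (2 * (t * w + w')) * / (2 * (1 - t) * w') by field; nra.
      have -> : (1 + t) / (1 - t) * (/ 2 * (1 + c)) = ((1 + t) * (1 + c) * w') * / (2 * (1 - t) * w') by field; nra.
      apply: Rmult_le_compat_r. apply/Rlt_le/Rinv_0_lt_compat; nra.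
      have hh : 0 <= (1 - t) * (c - 1) * w'.
        apply: Rmult_le_pos; [apply: Rmult_le_pos|]; lra.
      nra.
    rewrite /d2 in Hd. lra.
- move=> Hsym.
  have B0 := (Hrad _ (unit_opp _ _ u0s)).2.
  have B1 := bnd_opp _ _ _ Hsym B0.
  have E : vopp (vscal (omega (vopp u0)) (vopp u0)) = vscal (omega (vopp u0)) u0.
    apply: functional_extensionality => i; rewrite /vscal /vopp; ring.
  rewrite E in B1.
  have eq : omega u0 = omega (vopp u0) by apply: (UR u0); [exact w0 | exact w0' | exact: (Hrad _ u0s).2 | exact B1].
  have ce : c = 1 by rewrite Hc0 eq; field; lra.
  rewrite /d1 /d2 ce. have -> : / 2 * (1 + / 1) = 1 by field.
  have -> : / 2 * (1 + 1) = 1 by field.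
  rewrite ln_1; split; ring.
Qed.
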